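(* Let $R$ be a semiring. The class of normal monomorphisms and the class of normal epimorphisms in $\mathrm{Mod}_R$ each contain all isomorphisms and are closed under composition.
   Context: Semirings are commutative with $0,1$; an $R$-module is a commutative monoid with $R$-action; $\mathrm{Mod}_R$ is the category of $R$-modules. A morphism $f:M\to N$ is a normal monomorphism if it is the equalizer of some morphism $N\to L$ and the zero map; it is a normal epimorphism if it is the coequalizer of some morphism $L\to M$ and the zero map. *)

(* Defs.v *)
From HB Require Import structures.
From mathcomp Require Import all_boot all_order all_algebra.
Set Implicit Arguments. Unset Strict Implicit. Unset Printing Implicit Defensive.
Import GRing.Theory.
Local Open Scope ring_scope.

(* Semiring R : commutative semiring with 0,1 (comPzSemiRingType, 0 = 1 allowed). *)

Definition is_Rlin (R : comPzSemiRingType) (M N : lSemiModType R) (f : M -> N) : Prop :=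
  [/\ f 0 = 0, (forall x y, f (x + y) = f x + f y) & (forall (r : R) x, f (r *: x) = r *: f x)].

Definition is_Riso (R : comPzSemiRingType) (M N : lSemiModType R) (f : M -> N) : Prop :=
  is_Rlin f /\ exists g : N -> M, [/\ is_Rlin g, g \o f = id & f \o g = id].

Definition is_equalizer_zero (R : comPzSemiRingType) (M N L : lSemiModType R)
  (f : M -> N) (g : N -> L) : Prop :=
  g \o f = (fun _ => 0) /\
  forall (X : lSemiModType R) (h : X -> N), is_Rlin h -> g \o h = (fun _ => 0) ->
    exists u : X -> M, [/\ is_Rlin u, f \o u = h &
      forall u' : X -> M, is_Rlin u' -> f \o u' = h -> u' = u].

Definition is_coequalizer_zero (R : comPzSemiRingType) (M N L : lSemiModType R)
  (f : M -> N) (g : L -> M) : Prop :=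
  f \o g = (fun _ => 0) /\
  forall (X : lSemiModType R) (h : M -> X), is_Rlin h -> h \o g = (fun _ => 0) ->
    exists u : N -> X, [/\ is_Rlin u, u \o f = h &
      forall u' : N -> X, is_Rlin u' -> u' \o f = h -> u' = u].

Definition normal_mono (R : comPzSemiRingType) (M N : lSemiModType R) (f : M -> N) : Prop :=
  is_Rlin f /\ exists (L : lSemiModType R) (g : N -> L), is_Rlin g /\ is_equalizer_zero f g.

Definition normal_epi (R : comPzSemiRingType) (M N : lSemiModType R) (f : M -> N) : Prop :=
  is_Rlin f /\ exists (L : lSemiModType R) (g : L -> M), is_Rlin g /\ is_coequalizer_zero f g.

(* Main.v *)
Require Import Defs.
From Stdlib Require Import ClassicalEpsilon ClassicalDescription FunctionalExtensionality PropExtensionality.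
From HB Require Import structures.
From mathcomp Require Import all_boot all_order all_algebra.
Set Implicit Arguments. Unset Strict Implicit. Unset Printing Implicit Defensive.
Import GRing.Theory.
Local Open Scope ring_scope.

Definition pb (S : Prop) : bool := if excluded_middle_informative S then true else false.
Lemma pbP (S : Prop) : pb S <-> S.
Proof. rewrite /pb; case: excluded_middle_informative => //. Qed.

Record submod (R : comPzSemiRingType) (P : lSemiModType R) := SubMod {
  sS : P -> Prop; sS0 : sS 0; sSD : forall x y, sS x -> sS y -> sS (x + y);
  sSZ : forall (r : R) x, sS x -> sS (r *: x) }.
Record congr (R : comPzSemiRingType) (P : lSemiModType R) := Congr {
  cE : P -> P -> Prop; cErefl : forall x, cE x x; cEsym : forall x y, cE x y -> cE y x;
  cEtrans : forall x y z, cE x y -> cE y z -> cE x z;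
  cED : forall x y z, cE x y -> cE (x + z) (y + z);
  cEZ : forall (r : R) x y, cE x y -> cE (r *: x) (r *: y) }.

Section Sub.
Variables (R : comPzSemiRingType) (P : lSemiModType R) (sm : submod P).
Local Notation S := (sS sm).
Let S0 := sS0 sm. Let SD := @sSD _ _ sm. Let SZ := @sSZ _ _ sm.
Definition Sb := {x : P | pb (S x)}.
HB.instance Definition _ := Choice.on Sb.
HB.instance Definition _ := SubType.on Sb.
Let sadd (a b : Sb) : Sb := exist _ (val a + val b) (proj2 (pbP _) (SD (proj1 (pbP _) (valP a)) (proj1 (pbP _) (valP b)))).
Let szero : Sb := exist _ 0 (proj2 (pbP _) S0).
Let sscale (r : R) (a : Sb) : Sb := exist _ (r *: val a) (proj2 (pbP _) (SZ r (proj1 (pbP _) (valP a)))).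
Lemma sb_assoc : associative sadd. Proof. by move=> a b c; apply: val_inj; rewrite /= addrA. Qed.
Lemma sb_comm : commutative sadd. Proof. by move=> a b; apply: val_inj; rewrite /= addrC. Qed.
Lemma sb_add0 : left_id szero sadd. Proof. by move=> a; apply: val_inj; rewrite /= add0r. Qed.
HB.instance Definition _ := GRing.isNmodule.Build Sb sb_assoc sb_comm sb_add0.
Lemma sb_scalerA a b (v : Sb) : sscale a (sscale b v) = sscale (a * b) v.
Proof. by apply: val_inj; rewrite /= scalerA. Qed.
Lemma sb_scale0r (v : Sb) : sscale 0 v = 0.
Proof. by apply: val_inj; rewrite /= scale0r. Qed.
Lemma sb_scale1r : left_id 1 sscale.
Proof. by move=> v; apply: val_inj; rewrite /= scale1r. Qed.
Lemma sb_scalerDr : right_distributive sscale +%R.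
Proof. by move=> a u v; apply: val_inj; rewrite /= scalerDr. Qed.
Lemma sb_scalerDl (v : Sb) : {morph sscale^~ v: a b / a + b}.
Proof. by move=> a b; apply: val_inj; rewrite /= scalerDl. Qed.
HB.instance Definition _ := GRing.Nmodule_isLSemiModule.Build R Sb sb_scalerA sb_scale0r sb_scale1r sb_scalerDr sb_scalerDl.
Lemma sb_val0 : val (0 : Sb) = 0. Proof. by []. Qed.
Lemma sb_valD (a b : Sb) : val (a + b) = val a + val b. Proof. by []. Qed.
Lemma sb_valZ r (a : Sb) : val (r *: a) = r *: val a. Proof. by []. Qed.
End Sub.

Section Quot.
Variables (R : comPzSemiRingType) (P : lSemiModType R) (cg : congr P).
Local Notation E := (cE cg).
Let Erefl := cErefl cg. Let Esym := @cEsym _ _ cg. Let Etrans := @cEtrans _ _ cg.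
Let ED := @cED _ _ cg. Let EZ := @cEZ _ _ cg.
Definition rep (x : P) : P := epsilon (inhabits x) (fun y => E x y).
Lemma repE x : E x (rep x).
Proof. by apply: (epsilon_spec (inhabits x) (fun y => E x y)); exists x. Qed.
Lemma rep_eq x y : E x y -> rep x = rep y.
Proof.
move=> Exy; rewrite /rep.
have -> : (fun z => E x z) = (fun z => E y z).
  apply: functional_extensionality => z; apply: propositional_extensionality.
  split=> H; [exact: Etrans (Esym Exy) H | exact: Etrans Exy H].
have -> : inhabits x = inhabits y by apply: proof_irrelevance.
by [].
Qed.
Lemma rep_eqE x y : rep x = rep y -> E x y.
Proof. move=> h; apply: (Etrans (repE x)); rewrite h; exact: Esym (repE y). Qed.
Lemma repK x : rep (rep x) = rep x.
Proof. by symmetry; apply: rep_eq; apply: repE. Qed.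
Definition Qt := {x : P | x == rep x}.
HB.instance Definition _ := Choice.on Qt.
HB.instance Definition _ := SubType.on Qt.
Definition mk (x : P) : Qt := exist _ (rep x) (introT eqP (esym (repK x))).
Lemma mk_val (q : Qt) : mk (val q) = q.
Proof. apply: val_inj => /=; case: q => x /= /eqP h; by rewrite -h. Qed.
Lemma mk_eq x y : mk x = mk y <-> E x y.
Proof.
split=> [h|h]; last by apply: val_inj => /=; apply: rep_eq.
apply: rep_eqE; exact: (f_equal val h).
Qed.
Lemma E_val x : E (val (mk x)) x. Proof. exact: Esym (repE x). Qed.
Lemma ED2 x y x' y' : E x x' -> E y y' -> E (x + y) (x' + y').
Proof.
move=> h1 h2; apply: (Etrans (ED y h1)); rewrite (addrC x') (addrC x').
exact: ED.
Qed.
Let qadd (a b : Qt) : Qt := mk (val a + val b).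
Let qzero : Qt := mk 0.
Let qscale (r : R) (a : Qt) : Qt := mk (r *: val a).
Lemma q_assoc : associative qadd.
Proof.
move=> a b c; apply/mk_eq; apply: (Etrans (ED2 (Erefl _) (E_val _))).
rewrite addrA; apply: Esym; exact: ED2 (E_val _) (Erefl _).
Qed.
Lemma q_comm : commutative qadd.
Proof. by move=> a b; rewrite /qadd addrC. Qed.
Lemma q_add0 : left_id qzero qadd.
Proof. move=> a; rewrite -[RHS]mk_val; apply/mk_eq; rewrite -[X in E _ X]add0r; apply: ED; exact: E_val. Qed.
HB.instance Definition _ := GRing.isNmodule.Build Qt q_assoc q_comm q_add0.
Lemma q_scalerA a b (v : Qt) : qscale a (qscale b v) = qscale (a * b) v.
Proof. apply/mk_eq; rewrite -scalerA; apply: EZ; exact: E_val. Qed.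
Lemma q_scale0r (v : Qt) : qscale 0 v = 0.
Proof. by rewrite /qscale scale0r. Qed.
Lemma q_scale1r : left_id 1 qscale.
Proof. by move=> v; rewrite /qscale scale1r mk_val. Qed.
Lemma q_scalerDr : right_distributive qscale +%R.
Proof.
move=> a u v; apply/mk_eq; apply: (Etrans (EZ a (E_val _))).
rewrite scalerDr; apply: Esym; exact: ED2 (E_val _) (E_val _).
Qed.
Lemma q_scalerDl (v : Qt) : {morph qscale^~ v: a b / a + b}.
Proof.
move=> a b; apply/mk_eq; rewrite scalerDl; apply: Esym; exact: ED2 (E_val _) (E_val _).
Qed.
HB.instance Definition _ := GRing.Nmodule_isLSemiModule.Build R Qt q_scalerA q_scale0r q_scale1r q_scalerDr q_scalerDl.
Lemma mk0 : mk 0 = 0. Proof. by []. Qed.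
Lemma mkD x y : mk (x + y) = mk x + mk y.
Proof. apply/mk_eq; apply: Esym; exact: ED2 (E_val _) (E_val _). Qed.
Lemma mkZ r x : mk (r *: x) = r *: mk x.
Proof. apply/mk_eq; apply: EZ; exact: Esym (E_val _). Qed.
End Quot.


Section Main.
Variable R : comPzSemiRingType.

Lemma lin_comp (M N P : lSemiModType R) (f : M -> N) (g : N -> P) :
  is_Rlin f -> is_Rlin g -> is_Rlin (g \o f).
Proof.
case=> f0 fD fZ [g0 gD gZ]; split => /=.
- by rewrite f0 g0.
- by move=> x y; rewrite fD gD.
- by move=> r x; rewrite fZ gZ.
Qed.

Lemma lin_line (N : lSemiModType R) (n : N) : is_Rlin (fun r : R^o => r *: n).
Proof.
split => /=.
- by rewrite scale0r.
- by move=> x y; rewrite scalerDl.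
- by move=> r x; rewrite scalerA.
Qed.

Lemma compE (A B C : Type) (u : B -> C) (f : A -> B) (h : A -> C) :
  u \o f = h -> forall x, u (f x) = h x.
Proof. by move=> e x; rewrite -e. Qed.

Lemma app0 (A B : Type) (z : B) (F : A -> B) (x : A) : F = (fun _ => z) -> F x = z.
Proof. by move=> ->. Qed.

Lemma nm_inj (M N : lSemiModType R) (f : M -> N) : normal_mono f -> injective f.
Proof.
case=> flin [L [a [alin [af univ]]]] x y fxy.
have flin' := flin; case: flin' => f0 fD fZ.
case: alin => a0 aD aZ.
have afx : a (f x) = 0 by exact: (app0 x af).
have [|u [ulin uf uuniq]] := univ _ _ (lin_line (f x)).
  by apply: functional_extensionality => r /=; rewrite aZ afx scaler0.
have e1 := uuniq _ (lin_line x).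
have e2 := uuniq _ (lin_line y).
have h1 : (fun r : R^o => r *: x) = u.
  by apply: e1; apply: functional_extensionality => r /=; rewrite fZ.
have h2 : (fun r : R^o => r *: y) = u.
  by apply: e2; apply: functional_extensionality => r /=; rewrite fZ fxy.
have := congr1 (fun F => F (1 : R^o)) (etrans h1 (esym h2)).
by rewrite /= !scale1r.
Qed.

Lemma nm_ker (M N : lSemiModType R) (f : M -> N) (L : lSemiModType R) (a : N -> L) :
  is_Rlin a -> is_equalizer_zero f a -> forall n, a n = 0 -> exists m, f m = n.
Proof.
move=> alin [af univ] n an.
have [|u [ulin uf uuniq]] := univ _ _ (lin_line n).
  apply: functional_extensionality => r /=; case: alin => _ _ ->; by rewrite an scaler0.
exists (u 1); have := congr1 (fun F => F (1 : R^o)) uf; by rewrite /= scale1r.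
Qed.

Lemma nm_build (M N L : lSemiModType R) (f : M -> N) (k : N -> L) :
  is_Rlin f -> injective f -> is_Rlin k -> (forall n, k n = 0 <-> exists m, f m = n) ->
  normal_mono f.
Proof.
move=> flin finj klin kE; split => //; exists L, k; split => //; split.
  by apply: functional_extensionality => x /=; apply/kE; exists x.
move=> X h hlin hk.
have H x : exists m, f m = h x by apply/kE; exact: (app0 x hk).
pose u x := proj1_sig (constructive_indefinite_description _ (H x)).
have uP x : f (u x) = h x by exact: proj2_sig (constructive_indefinite_description _ (H x)).
case: flin => f0 fD fZ; case: hlin => h0 hD hZ.
exists u; split.
- split.
  + by apply: finj; rewrite uP h0 f0.
  + by move=> x y; apply: finj; rewrite fD !uP hD.
  + by move=> r x; apply: finj; rewrite fZ !uP hZ.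
- by apply: functional_extensionality => x /=; rewrite uP.
- move=> u' _ hu'; apply: functional_extensionality => x; apply: finj.
  by rewrite uP; exact: (congr1 (fun F => F x) hu').
Qed.

Lemma zero_lin (M N : lSemiModType R) : is_Rlin (fun _ : M => (0 : N)).
Proof. by split => //= [|r _]; rewrite ?addr0 ?scaler0. Qed.

Lemma iso_mono (M N : lSemiModType R) (f : M -> N) : is_Riso f -> normal_mono f.
Proof.
case=> flin [g [glin gf fg]].
apply: (@nm_build _ _ N f (fun _ => 0)) => //.
- move=> x y e; have := congr1 g e.
  by move: (congr1 (fun F => F x) gf) (congr1 (fun F => F y) gf) => /= -> ->.
- exact: zero_lin.
- move=> n; split=> // _; exists (g n); exact: (congr1 (fun F => F n) fg).
Qed.

Lemma mono_comp (M N P : lSemiModType R) (f : M -> N) (g : N -> P) :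
  normal_mono f -> normal_mono g -> normal_mono (g \o f).
Proof.
move=> nf ng.
have finj := nm_inj nf; have ginj := nm_inj ng.
case: nf => flin [L1 [a [alin aeq]]]; case: ng => glin [L2 [b [blin beq]]].
have gflin := lin_comp flin glin.
case: (gflin) => gf0 gfD gfZ.
pose K p := exists m, g (f m) = p.
have K0 : K 0 by exists 0.
have KD x y : K x -> K y -> K (x + y).
  by case=> m1 <- [m2 <-]; exists (m1 + m2); exact: (gfD m1 m2).
have KZ r x : K x -> K (r *: x).
  by case=> m1 <-; exists (r *: m1); exact: (gfZ r m1).
pose E x y := exists k1 k2, [/\ K k1, K k2 & x + k1 = y + k2].
have Erefl x : E x x by exists 0, 0.
have Esym x y : E x y -> E y x by case=> k1 [k2 [? ? e]]; exists k2, k1.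
have Etrans x y z : E x y -> E y z -> E x z.
  case=> k1 [k2 [K1 K2 e1]] [k3 [k4 [K3 K4 e2]]].
  exists (k1 + k3), (k4 + k2); split; try exact: KD.
  by rewrite addrA e1 addrAC e2 -addrA.
have ED x y z : E x y -> E (x + z) (y + z).
  by case=> k1 [k2 [K1 K2 e]]; exists k1, k2; split => //; rewrite addrAC e addrAC.
have EZ r x y : E x y -> E (r *: x) (r *: y).
  case=> k1 [k2 [K1 K2 e]]; exists (r *: k1), (r *: k2); split; try exact: KZ.
  by rewrite -!scalerDr e.
pose cg := Congr Erefl Esym Etrans ED EZ.
apply: (@nm_build _ _ (Qt cg) _ (mk cg)) => //.
- by move=> x y /ginj /finj.
- split; [exact: mk0 | exact: mkD | exact: mkZ].
- move=> p; rewrite -(mk0 cg) mk_eq /=; split; last first.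
    case=> m <-; exists 0, (g (f m)); split => //; first by exists m.
    by rewrite addr0 add0r.
  case=> k1 [k2 [[m1 e1] [m2 e2] e]].
  rewrite add0r in e.
  have bg m : b (g m) = 0 by exact: (app0 m (proj1 beq)).
  have af m : a (f m) = 0 by exact: (app0 m (proj1 aeq)).
  case: (blin) => b0 bD bZ; case: (alin) => a0 aD aZ.
  have bp : b p = 0.
    by have := congr1 b e; rewrite bD -e1 -e2 !bg addr0.
  have [n gn] := nm_ker blin beq bp.
  have e' : n + f m1 = f m2 by apply: ginj; case: glin => _ gD _; rewrite gD gn e1 e2.
  have an : a n = 0 by have := congr1 a e'; rewrite aD !af addr0.
  have [m fm] := nm_ker alin aeq an.
  by exists m; rewrite fm gn.
Qed.

Lemma sb_mk (P : lSemiModType R) (sm : submod P) (x : P) : sS sm x -> Sb sm.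
Proof. move=> h; exact: (exist _ x (proj2 (pbP _) h)). Defined.

Lemma ne_surj (M N : lSemiModType R) (f : M -> N) : normal_epi f -> forall n, exists m, f m = n.
Proof.
case=> flin [L [a [alin [fa univ]]]].
case: (flin) => f0 fD fZ.
pose S n := exists m, f m = n.
have S0 : S 0 by exists 0.
have SD x y : S x -> S y -> S (x + y) by case=> m1 <- [m2 <-]; exists (m1 + m2).
have SZ r x : S x -> S (r *: x) by case=> m1 <-; exists (r *: m1).
pose sm := SubMod S0 SD SZ.
pose h (m : M) : Sb sm := @sb_mk _ sm (f m) (ex_intro _ m erefl).
have hlin : is_Rlin h.
  by split => [|x y|r x]; apply: val_inj; rewrite /= ?f0 ?fD ?fZ.
have [|u [ulin uf _]] := univ _ h hlin.
  apply: functional_extensionality => l; apply: val_inj => /=.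
  exact: (app0 l fa).
have [|w [_ _ wuniq]] := univ _ f flin; first exact: fa.
have vlin : is_Rlin (fun n => val (u n)).
  by case: ulin => u0 uD uZ; split => [|x y|r x]; rewrite ?u0 ?uD ?uZ.
have idlin : is_Rlin (@id N) by split.
have h1 : (fun n => val (u n)) = w.
  apply: wuniq => //; apply: functional_extensionality => m /=.
  by rewrite (compE uf).
have h2 : id = w by apply: wuniq.
have : (fun n => val (u n)) = id by rewrite h1 h2.
move=> e n; have := valP (u n); move/pbP => [m fm]; exists m.
by rewrite fm; exact: (congr1 (fun F => F n) e).
Qed.

Lemma iso_epi (M N : lSemiModType R) (f : M -> N) : is_Riso f -> normal_epi f.
Proof.
case=> flin [g [glin gf fg]]; split => //; exists M, (fun _ => 0); split.
  exact: zero_lin.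
split.
  by apply: functional_extensionality => x /=; case: flin.
move=> X h hlin _; exists (h \o g); split.
- exact: lin_comp.
- apply: functional_extensionality => x /=; by rewrite (compE gf).
- move=> u' _ hu'; apply: functional_extensionality => n /=.
  by rewrite -(compE hu' (g n)) (compE fg).
Qed.

Lemma epi_comp (M N P : lSemiModType R) (f : M -> N) (g : N -> P) :
  normal_epi f -> normal_epi g -> normal_epi (g \o f).
Proof.
move=> nf ng.
have fsurj := ne_surj nf.
case: nf => flin [L1 [a [alin [fa funiv]]]]; case: ng => glin [L2 [b [blin [gb guniv]]]].
case: (flin) => f0 fD fZ; case: (blin) => b0 bD bZ.
pose S m := exists l, f m = b l.
have S0 : S 0 by exists 0; rewrite f0 b0.
have SD x y : S x -> S y -> S (x + y).
  by case=> l1 e1 [l2 e2]; exists (l1 + l2); rewrite fD bD e1 e2.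
have SZ r x : S x -> S (r *: x) by case=> l1 e1; exists (r *: l1); rewrite fZ bZ e1.
pose sm := SubMod S0 SD SZ.
split; first exact: lin_comp.
exists (Sb sm), val; split; first by split.
split.
  apply: functional_extensionality => x /=.
  have := valP x; move/pbP => [l ->]; exact: (app0 l gb).
move=> X h hlin hc.
have [|u [ulin uf uuniq]] := funiv _ h hlin.
  apply: functional_extensionality => l /=.
  have Sa : S (a l) by exists 0; rewrite b0; exact: (app0 l fa).
  exact: (app0 (@sb_mk _ sm (a l) Sa) hc).
have [|v [vlin vg vuniq]] := guniv _ u ulin.
  apply: functional_extensionality => l /=.
  have [m fm] := fsurj (b l).
  have Sm : S m by exists l.
  rewrite -fm (compE uf); exact: (app0 (@sb_mk _ sm m Sm) hc).
exists v; split => //.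
- apply: functional_extensionality => x /=.
  by rewrite (compE vg) (compE uf).
- move=> v' v'lin hv'.
  have e : v' \o g = u by apply: uuniq => //; exact: lin_comp.
  exact: vuniq.
Qed.

End Main.

Theorem mainTheorem11 (R : comPzSemiRingType) :
  ((forall (M N : lSemiModType R) (f : M -> N), is_Riso f -> normal_mono f) /\
   (forall (M N P : lSemiModType R) (f : M -> N) (g : N -> P),
      normal_mono f -> normal_mono g -> normal_mono (g \o f))) /\
  ((forall (M N : lSemiModType R) (f : M -> N), is_Riso f -> normal_epi f) /\
   (forall (M N P : lSemiModType R) (f : M -> N) (g : N -> P),
      normal_epi f -> normal_epi g -> normal_epi (g \o f))).
Proof.
split; split.
- exact: iso_mono.
- exact: mono_comp.
- exact: iso_epi.
- exact: epi_comp.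
Qed.
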